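(* If a graph $G$ is a $k$-AND-PCG, then its complement $\overline{G}$ is a $2k$-OR-PCG.
   Context: All trees are unrooted with edges weighted by nonnegative reals; $d_T(u,v)$ is the weight of the path between leaves $u,v$ of $T$. A graph $H$ is a PCG if there exist a tree $T$ with leaf set $V(H)$ and an interval $I$ of nonnegative reals such that $\{u,v\}\in E(H)$ iff $d_T(u,v)\in I$. A graph $G=(V,E)$ is a $k$-OR-PCG (resp. $k$-AND-PCG) if there exist $k$ PCGs $G_1,\ldots,G_k$ on vertex set $V$ with $E=\bigcup_i E(G_i)$ (resp. $E=\bigcap_i E(G_i)$). $\overline{G}$ denotes the complement graph. *)

(* Defs.v *)
From HB Require Import structures.
From mathcomp Require Import all_boot all_order all_algebra.
From mathcomp Require Import reals.
Set Implicit Arguments. Unset Strict Implicit. Unset Printing Implicit Defensive.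
Import Order.TTheory GRing.Theory Num.Theory.
Local Open Scope ring_scope.

Definition is_tree (N : finType) (e : rel N) : Prop :=
  symmetric e /\ irreflexive e /\
  (forall x y : N, connect e x y) /\
  (forall (x : N) (p q : seq N),
      path e x p -> path e x q -> uniq (x :: p) -> uniq (x :: q) ->
      last x p = last x q -> p = q).

Definition is_leaf (N : finType) (e : rel N) (x : N) : bool :=
  (#|[set y | e x y]| <= 1)%N.

Definition walk_weight (R : realType) (N : finType) (w : N -> N -> R)
    (x : N) (p : seq N) : R :=
  \sum_(d <- pairmap w x p) d.

Definition tdist_in (R : realType) (N : finType) (e : rel N)
    (w : N -> N -> R) (a b : N) (I : interval R) : Prop :=
  exists p : seq N, [/\ path e a p, last a p = b, uniq (a :: p)
                      & walk_weight w a p \in I].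

(* H (a graph on V, given by its adjacency relation) is a pairwise
   compatibility graph: there are an edge-weighted tree T (nonnegative
   weights) whose leaf set is (a bijective copy of) V, and an interval I of
   nonnegative reals, with {u,v} in E(H) iff d_T(u,v) \in I. *)
Definition is_PCG (R : realType) (V : finType) (H : rel V) : Prop :=
  exists (N : finType) (e : rel N) (w : N -> N -> R) (f : V -> N)
         (I : interval R),
    [/\ is_tree e,
        (forall x y, e x y -> 0 <= w x y /\ w x y = w y x),
        injective f &
      [/\ (forall x, is_leaf e x <-> exists v, f v = x),
        (forall r : R, r \in I -> 0 <= r)
      & (forall u v, u != v -> (H u v <-> tdist_in e w (f u) (f v) I))]].

Definition simple_graph (V : finType) (E : rel V) : Prop :=
  symmetric E /\ irreflexive E.

Definition compl_graph (V : finType) (E : rel V) : rel V :=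
  fun u v => (u != v) && ~~ E u v.

Definition is_k_OR_PCG (R : realType) (k : nat) (V : finType) (E : rel V) : Prop :=
  exists G : 'I_k -> rel V,
    (forall i, is_PCG R (G i)) /\
    (forall u v, u != v -> (E u v <-> exists i, G i u v)).

Definition is_k_AND_PCG (R : realType) (k : nat) (V : finType) (E : rel V) : Prop :=
  exists G : 'I_k -> rel V,
    (forall i, is_PCG R (G i)) /\
    (forall u v, u != v -> (E u v <-> forall i, G i u v)).

(* Main.v *)
Require Import Defs.
From mathcomp Require Import all_boot all_order all_algebra.
From mathcomp Require Import reals.
From mathcomp Require Import boolp zify.
Set Implicit Arguments. Unset Strict Implicit. Unset Printing Implicit Defensive.
Import Order.TTheory GRing.Theory Num.Theory.
Local Open Scope ring_scope.

Section Aux.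
Variable R : realType.

Lemma tree_upath (N : finType) (e : rel N) (a b : N) : is_tree e ->
  exists p, [/\ path e a p, last a p = b, uniq (a :: p) &
    forall q, path e a q -> last a q = b -> uniq (a :: q) -> q = p].
Proof.
case=> _ [_ [con uniqp]].
have /connectP [p0 pp0 lp0] := con a b.
subst b; case: (shortenP pp0) => p' pp' up' _.
exists p'; split => //.
move=> q pq lq uq; exact: (uniqp a q p' pq pp' uq up' lq).
Qed.

Lemma ww_ge0 (N : finType) (e : rel N) (w : N -> N -> R) a p :
  (forall x y, e x y -> 0 <= w x y /\ w x y = w y x) ->
  path e a p -> 0 <= walk_weight w a p.
Proof.
move=> hw; elim: p a => [|y p IH] a /=; first by rewrite /walk_weight big_nil.
case/andP=> eay pp; rewrite /walk_weight /= big_cons.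
apply: addr_ge0; first by case: (hw _ _ eay).
exact: IH.
Qed.

Definition sideI (s : bool) (I : interval R) : interval R :=
  if s then Order.meet (Interval -oo%O I.1) `[0, +oo[
  else Order.meet (Interval I.2 +oo%O) `[0, +oo[.

Lemma sideI_ge0 s I r : r \in sideI s I -> 0 <= r.
Proof.
by case: s; rewrite /sideI in_itvI => /andP[_]; rewrite in_itv /= andbT.
Qed.

Lemma compl_tdist (N : finType) (e : rel N) (w : N -> N -> R) a b I :
  is_tree e -> (forall x y, e x y -> 0 <= w x y /\ w x y = w y x) ->
  (~ tdist_in e w a b I <-> exists s, tdist_in e w a b (sideI s I)).
Proof.
move=> tr hw; have [p [pp lp up uniqp]] := tree_upath a b tr.
have key J : tdist_in e w a b J <-> walk_weight w a p \in J.
  split; first by case=> q [pq lq uq]; rewrite (uniqp q pq lq uq).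
  by move=> h; exists p.
have ge0 := ww_ge0 hw pp.
rewrite key; split.
- move/negP => h.
  have := predC_itv I (walk_weight w a p); rewrite inE /= h /= => /esym/orP[h1|h2].
  + by exists true; apply/key; rewrite /sideI in_itvI h1 in_itv /= andbT.
  + by exists false; apply/key; rewrite /sideI in_itvI h2 in_itv /= andbT.
- case=> s /key; rewrite /sideI; case: s; rewrite in_itvI => /andP[h _];
  apply/negP; rewrite -[_ \notin _]/(walk_weight w a p \in [predC I]) predC_itv inE /= h ?orbT //.
Qed.

Local Unset Implicit Arguments.
Record pdata (V : finType) := PD {
  pN : finType; pe : rel pN; pw : pN -> pN -> R; pf : V -> pN; pI : interval R }.
Arguments pN {V}. Arguments pe {V}. Arguments pw {V}. Arguments pf {V}. Arguments pI {V}.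
Local Set Implicit Arguments.

Definition pspec (V : finType) (H : rel V) (D : pdata V) : Prop :=
    [/\ is_tree (pe D),
        (forall x y, pe D x y -> 0 <= pw D x y /\ pw D x y = pw D y x),
        injective (pf D) &
      [/\ (forall x, is_leaf (pe D) x <-> exists v, pf D v = x),
        (forall r : R, r \in pI D -> 0 <= r)
      & (forall u v, u != v -> (H u v <-> tdist_in (pe D) (pw D) (pf D u) (pf D v) (pI D)))]].

Lemma is_PCG_spec (V : finType) (H : rel V) : is_PCG R H -> exists D, pspec H D.
Proof.
by case=> N [e [w [f [I h]]]]; exists (PD V N e w f I).
Qed.

Definition side_rel (V : finType) (D : pdata V) (s : bool) : rel V :=
  fun u v => `[< tdist_in (pe D) (pw D) (pf D u) (pf D v) (sideI s (pI D)) >].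

Lemma side_PCG (V : finType) (H : rel V) (D : pdata V) s :
  pspec H D -> is_PCG R (side_rel D s).
Proof.
case=> tr hw inj [lf _ _].
exists (pN D), (pe D), (pw D), (pf D), (sideI s (pI D)); split => //; split => //.
- exact: sideI_ge0.
- by move=> u v _; rewrite /side_rel; split => /asboolP.
Qed.

End Aux.
Arguments pN {R V}. Arguments pe {R V}. Arguments pw {R V}. Arguments pf {R V}. Arguments pI {R V}.

Lemma half_lt k (j : 'I_(2 * k)) : (j %/ 2 < k)%N.
Proof. have := ltn_ord j; rewrite ltn_divLR //; lia. Qed.

Theorem theorem9 (R : realType) (k : nat) (V : finType) (E : rel V) :
  simple_graph E ->
  is_k_AND_PCG R k E ->
  is_k_OR_PCG R (2 * k) (compl_graph E).
Proof.
move=> _ [G [hG hE]].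
have [D hD] := choice (fun i => is_PCG_spec (hG i)).
pose idx (j : 'I_(2 * k)) : 'I_k := Ordinal (half_lt j).
exists (fun j => side_rel (D (idx j)) (odd j)); split.
  by move=> j; apply: side_PCG (hD (idx j)).
move=> u v uv; rewrite /compl_graph uv /=.
split.
- move/negP => nE.
  have [i ni] : exists i, ~ G i u v.
    apply: contrapT => hn; apply: nE; apply/hE => // i.
    by apply: contrapT => h; apply: hn; exists i.
  have [tr hw _ [_ _ hH]] := hD i.
  have [s hs] : exists s, tdist_in (pe (D i)) (pw (D i)) (pf (D i) u) (pf (D i) v) (sideI s (pI (D i))).
    by apply/(compl_tdist _ _ _ tr hw) => /(hH _ _ uv).
  have jlt : (2 * i + s < 2 * k)%N by have := ltn_ord i; case: (s); lia.
  exists (Ordinal jlt).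
  have eqi : idx (Ordinal jlt) = i.
    apply: val_inj => /=; case: (s) => /=; lia.
  have eqs : odd (Ordinal jlt) = s by rewrite /= oddD oddM /=; case: (s).
  rewrite /side_rel eqi eqs; exact/asboolP.
- case=> j /asboolP hj; apply/negP => Euv.
  have [tr hw _ [_ _ hH]] := hD (idx j).
  have := (hE u v uv).1 Euv (idx j); rewrite (hH _ _ uv).
  by apply/(compl_tdist _ _ _ tr hw); exists (odd j).
Qed.
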